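(* In the setting of the context, assume (G1), (G2), (G3). Let $M:=(2c_D^2c^2c_1^2)\vee(3cc_2)$, let $k\in\mathbb N$ be such that $M\le M_0^k$ and $\alpha_0^k<1/4$, put $\alpha_M:=\alpha_0^k$, and let $0<\alpha\le\alpha_M$. Let $\eta:=(2c_Dc^3c_1^2c_2)^{-1}$. Then for every $x_0\in X_0$ and $0<r<R_0(x_0)$, every $x\in U(x_0,\alpha r)$ and every closed set $A\subseteq U(x_0,\alpha r)$, $$\varepsilon_x^{A\cup (X\setminus U(x_0,r))}(A)\ \ge\ \eta\,\frac{\operatorname{cap}A}{\operatorname{cap}U(x_0,\alpha r)}.$$
   Context: $(X,\rho)$ is a separable metric space, $X_0\subseteq X$ open; $\mathcal M(X)$ the finite Borel measures (extended to universally measurable sets), $\|\mu\|:=\mu(X)$, $\varepsilon_x$ the Dirac measure. For every open $U\subseteq X$ and $x\in X$ a measure $\mu_x^U\in\mathcal M(X)$ is given such that for all open $U,V$ and all $x$: $\mu_x^U(U)=0$, $\|\mu_x^U\|\le1$, $\mu_x^U=\varepsilon_x$ if $x\notin U$; $y\mapsto\mu_y^U(E)$ is universally measurable for Borel $E$; $\mu_x^U=\int\mu_y^U\,d\mu_x^V(y)$ if $V\subseteq U$. For closed $A$, $\varepsilon_x^A:=\mu_x^{X\setminus A}$. $\mathcal U(X_0)$: open $U$ with $\overline U\subseteq X_0$; $U(x,r)$ open ball; $R_0(x):=\sup\{r>0:\overline{U(x,r)}\subseteq X_0\}$. $G\colon X\times X\to(0,\infty]$ Borel, $G\mu(x):=\int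 G(x,y)d\mu(y)$, $\operatorname{cap}A:=\sup\{\|\mu\|:\mu\in\mathcal M(X),\ \mu(X\setminus A)=0,\ G\mu\le1\}$. (G1): there is $c_1\ge1$ such that for all $U\in\mathcal U(X_0)$, $x\in U$, $\delta>0$, closed $A\subseteq U$ there are a closed neighborhood $B\subseteq U$ of $A$ and a measure $\nu$ carried by $B$ with $\|\varepsilon_x^B\|-\delta<c_1\|\varepsilon_x^A\|$ and $\|\varepsilon_y^A\|\le G\nu(y)\le c_1\|\varepsilon_y^B\|$ for all $y$. (G2): there are a strictly decreasing continuous $g\colon[0,\infty)\to(0,\infty]$ and $c,c_D,M_0\in[1,\infty)$, $\alpha_0\in(0,1)$ with $g(r/2)\le c_Dg(r)$, $M_0g(r)\le g(\alpha_0r)$ for all $r>0$ and $c^{-1}g\circ\rho\le G\le c\,g\circ\rho$. (G3): there is $c_2\ge1$ with $\operatorname{cap}U(x,r)\ge c_2^{-1}g(r)^{-1}$ for all $x\in X_0$, $0<r<R_0(x)$. *)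

(* Defs.v *)
From HB Require Import structures.
From mathcomp Require Import all_boot all_order all_algebra.
From mathcomp Require Import all_classical all_reals all_analysis measurable_realfun.
Set Implicit Arguments. Unset Strict Implicit. Unset Printing Implicit Defensive.
Import Order.TTheory GRing.Theory Num.Theory.
Local Open Scope classical_set_scope.
Local Open Scope ring_scope.

Definition is_metric (R : realType) (X : Type) (rho : X -> X -> R) : Prop :=
  [/\ (forall x y, 0 <= rho x y), (forall x y, rho x y = 0 <-> x = y),
      (forall x y, rho x y = rho y x) &
      (forall x y z, rho x z <= rho x y + rho y z)].

Definition mball (R : realType) (X : Type) (rho : X -> X -> R) (x : X) (r : R)
  : set X := [set y | rho x y < r].

Definition mopen (R : realType) (X : Type) (rho : X -> X -> R) (U : set X) : Prop :=
  forall x, U x -> exists2 r : R, 0 < r & mball rho x r `<=` U.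

Definition mclosed (R : realType) (X : Type) (rho : X -> X -> R) (A : set X) : Prop :=
  mopen rho (~` A).

Definition mclosure (R : realType) (X : Type) (rho : X -> X -> R) (A : set X) : set X :=
  [set x | forall e : R, 0 < e -> exists2 y, A y & rho x y < e].

Definition minterior (R : realType) (X : Type) (rho : X -> X -> R) (A : set X) : set X :=
  [set x | exists2 r : R, 0 < r & mball rho x r `<=` A].

Definition mseparable (R : realType) (X : Type) (rho : X -> X -> R) : Prop :=
  exists D : set X, countable D /\
    forall x (e : R), 0 < e -> exists2 d, D d & rho x d < e.

Definition calU (R : realType) (X : Type) (rho : X -> X -> R) (X0 U : set X) : Prop :=
  mopen rho U /\ mclosure rho U `<=` X0.

Definition R0 (R : realType) (X : Type) (rho : X -> X -> R) (X0 : set X) (x : X)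
  : \bar R :=
  ereal_sup [set r%:E | r in [set r : R | 0 < r /\ mclosure rho (mball rho x r) `<=` X0]].

Notation Borel rho := (g_sigma_algebraType (mopen rho)).

(** universally measurable sets: measurable for the completion of every
    finite Borel measure *)
Definition umeasurable (R : realType) (X : pointedType) (rho : X -> X -> R)
  (A : set X) : Prop :=
  forall mu : {finite_measure set (Borel rho) -> \bar R},
    exists B1 B2 : set (Borel rho),
      [/\ measurable B1, measurable B2, B1 `<=` A, A `<=` B2 &
          mu (B2 `\` B1) = 0%E].

Definition umeasurable_fun (R : realType) (X : pointedType) (rho : X -> X -> R)
  (f : X -> \bar R) : Prop :=
  forall t : R, umeasurable rho [set y | (f y < t%:E)%E].

(** The integral condition is stated with respect to
    the completion of mu_x^V: it holds for every Borel version f of the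
    universally measurable function y |-> mu_y^U(E). *)
Definition balayage_family (R : realType) (X : pointedType) (rho : X -> X -> R)
  (mu : set X -> X -> {finite_measure set (Borel rho) -> \bar R}) : Prop :=
  [/\ (forall U x, mopen rho U -> mu U x U = 0%E),
      (forall U x, mopen rho U -> (mu U x setT <= 1)%E),
      (forall U x, mopen rho U -> ~ U x ->
         forall E : set (Borel rho), measurable E -> mu U x E = @dirac _ (Borel rho) x R E),
      (forall U (E : set (Borel rho)), mopen rho U -> measurable E ->
         umeasurable_fun rho (fun y => mu U y E)) &
      (forall U V (x : X), mopen rho U -> mopen rho V -> V `<=` U ->
         forall E : set (Borel rho), measurable E ->
         forall f : Borel rho -> \bar R, measurable_fun [set: Borel rho] f ->
           {ae mu V x, forall y, f y = mu U y E} ->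
           mu U x E = (\int[mu V x]_y f y)%E)].

Definition eps (R : realType) (X : pointedType) (rho : X -> X -> R)
  (mu : set X -> X -> {finite_measure set (Borel rho) -> \bar R})
  (A : set X) (x : X) : {finite_measure set (Borel rho) -> \bar R} :=
  mu (~` A) x.

Definition pot (R : realType) (X : pointedType) (rho : X -> X -> R)
  (G : X -> X -> \bar R) (nu : {finite_measure set (Borel rho) -> \bar R}) (x : X)
  : \bar R := (\int[nu]_y G x y)%E.

Definition cap (R : realType) (X : pointedType) (rho : X -> X -> R)
  (G : X -> X -> \bar R) (A : set X) : \bar R :=
  ereal_sup [set nu setT | nu in
    [set nu : {finite_measure set (Borel rho) -> \bar R} |
       nu (~` A) = 0%E /\ forall x, (pot G nu x <= 1)%E]].

Definition borel_kernel (R : realType) (X : pointedType) (rho : X -> X -> R)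
  (G : X -> X -> \bar R) : Prop :=
  (forall x y, (0 < G x y)%E) /\
  measurable_fun setT (fun p : (Borel rho * Borel rho)%type => G p.1 p.2).

Definition G1 (R : realType) (X : pointedType) (rho : X -> X -> R)
  (mu : set X -> X -> {finite_measure set (Borel rho) -> \bar R})
  (G : X -> X -> \bar R) (X0 : set X) (c1 : R) : Prop :=
  1 <= c1 /\
  forall (U : set X) (x : X) (delta : R) (A : set X),
    calU rho X0 U -> U x -> 0 < delta -> mclosed rho A -> A `<=` U ->
    exists (B : set X) (nu : {finite_measure set (Borel rho) -> \bar R}),
      [/\ [/\ mclosed rho B, A `<=` minterior rho B & B `<=` U], nu (~` B) = 0%E,
          (eps mu B x setT - delta%:E < c1%:E * eps mu A x setT)%E &
          forall y, (eps mu A y setT <= pot G nu y)%E /\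
                    (pot G nu y <= c1%:E * eps mu B y setT)%E].

Definition G2 (R : realType) (X : pointedType) (rho : X -> X -> R)
  (G : X -> X -> \bar R) (g : R -> \bar R) (c cD M0 alpha0 : R) : Prop :=
  [/\ [/\ (forall s t : R, 0 <= s -> s < t -> (g t < g s)%E),
          {within `[0, +oo[, continuous g} &
          (forall t : R, 0 <= t -> (0 < g t)%E)],
      [/\ 1 <= c, 1 <= cD, 1 <= M0, 0 < alpha0 & alpha0 < 1],
      (forall r : R, 0 < r -> (g (r / 2)%R <= cD%:E * g r)%E),
      (forall r : R, 0 < r -> (M0%:E * g r <= g (alpha0 * r)%R)%E) &
      (forall x y, (c^-1%:E * g (rho x y) <= G x y)%E /\
                   (G x y <= c%:E * g (rho x y))%E)].

Definition G3 (R : realType) (X : pointedType) (rho : X -> X -> R)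
  (G : X -> X -> \bar R) (g : R -> \bar R) (X0 : set X) (c2 : R) : Prop :=
  1 <= c2 /\
  forall (x : X) (r : R), X0 x -> 0 < r -> (r%:E < R0 rho X0 x)%E ->
    (c2^-1%:E * (g r)^-1 <= cap rho G (mball rho x r))%E.

(* Main.v *)
Require Import Defs.
From HB Require Import structures.
From mathcomp Require Import all_boot all_order all_algebra.
From mathcomp Require Import all_classical all_reals all_analysis measurable_realfun.
Import Order.TTheory GRing.Theory Num.Theory.
Local Open Scope classical_set_scope.
Local Open Scope ring_scope.
From mathcomp Require Import ring lra.
Set Implicit Arguments. Unset Strict Implicit. Unset Printing Implicit Defensive.
Local Open Scope ereal_scope.
Lemma mball_open (R : realType) (X : pointedType) (rho : X -> X -> R) x r :
  is_metric rho -> mopen rho (mball rho x r).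
Proof.
case=> h0 h1 hs ht y /= hy; exists (r - rho x y)%R; first by rewrite subr_gt0.
move=> z /= hz; apply: (le_lt_trans (ht x y z)).
by rewrite -ltrBrDl.
Qed.

Lemma mopenI (R : realType) (X : pointedType) (rho : X -> X -> R) U V :
  mopen rho U -> mopen rho V -> mopen rho (U `&` V).
Proof.
move=> oU oV y [Uy Vy].
have [e1 e10 h1] := oU y Uy; have [e2 e20 h2] := oV y Vy.
exists (Num.min e1 e2); first by rewrite lt_min e10 e20.
move=> z /= hz; have hz1 : (rho y z < e1)%R by apply: (lt_le_trans hz); rewrite ge_min lexx.
have hz2 : (rho y z < e2)%R by apply: (lt_le_trans hz); rewrite ge_min lexx orbT.
split.
- exact: h1.
- exact: h2.
Qed.

Lemma mball_sub (R : realType) (X : pointedType) (rho : X -> X -> R) x r s :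
  (r <= s)%R -> mball rho x r `<=` mball rho x s.
Proof. by move=> rs y /= h; exact: (lt_le_trans h). Qed.

Lemma mclosure_sub (R : realType) (X : pointedType) (rho : X -> X -> R) A B :
  A `<=` B -> mclosure rho A `<=` mclosure rho B.
Proof. move=> AB y /= h e e0; have [z Az hz] := h e e0; exists z => //; exact: AB. Qed.

Lemma R0_closure (R : realType) (X : pointedType) (rho : X -> X -> R) X0 x r :
  r%:E < R0 rho X0 x -> mclosure rho (mball rho x r) `<=` X0.
Proof.
move=> /ereal_sup_gt [_ [s [s0 hs] <-]]; rewrite lte_fin => rs.
apply: subset_trans hs; apply: mclosure_sub; apply: mball_sub; exact: ltW.
Qed.

Lemma calU_ball (R : realType) (X : pointedType) (rho : X -> X -> R) X0 x r :
  is_metric rho -> r%:E < R0 rho X0 x -> calU rho X0 (mball rho x r).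
Proof. move=> hm hr; split; [exact: mball_open | exact: R0_closure]. Qed.

Lemma mopen_meas (R : realType) (X : pointedType) (rho : X -> X -> R) (U : set X) :
  mopen rho U -> measurable (U : set (Borel rho)).
Proof. move=> oU. exact: sub_sigma_algebra. Qed.
Lemma mclosed_meas (R : realType) (X : pointedType) (rho : X -> X -> R) (U : set X) :
  mclosed rho U -> measurable (U : set (Borel rho)).
Proof. move=> oU. rewrite -(setCK U). apply: measurableC. exact: mopen_meas. Qed.
Lemma borel_version (R : realType) (X : pointedType) (rho : X -> X -> R)
  (P : {finite_measure set (Borel rho) -> \bar R}) (h : X -> \bar R) :
  umeasurable_fun rho h -> (forall y, 0 <= h y) -> (forall y, h y \is a fin_num) ->
  exists f : Borel rho -> \bar R,
    [/\ measurable_fun setT f, (forall y, 0 <= f y) & {ae P, forall y, f y = h y}].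
Proof.
move=> hm h0 hfin.
have hB : forall q : rat, exists B : set (Borel rho) * set (Borel rho),
    [/\ measurable B.1, measurable B.2, B.1 `<=` [set y | h y < (ratr q)%:E],
        [set y | h y < (ratr q)%:E] `<=` B.2 & P (B.2 `\` B.1) = 0].
  move=> q; have [B1 [B2 [m1 m2 s1 s2 n]]] := hm (ratr q) P.
  by exists (B1, B2).
have [BB hBB] := choice hB.
pose qs (n : nat) : rat := odflt 0%R (@unpickle rat n).
have qsP : forall q, qs (pickle q) = q by move=> q; rewrite /qs pickleK.
pose phi (n : nat) (y : Borel rho) : \bar R :=
  if y \in (BB (qs n)).1 then (ratr (qs n))%:E else +oo.
pose f (y : Borel rho) := einfs (fun n => phi n y) 0%N.
have phih : forall n y, h y < phi n y.
  move=> n y; rewrite /phi; case: ifPn => [/set_mem|_].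
    by have [_ _ s1 _ _] := hBB (qs n); move/s1.
  by rewrite ltey_eq hfin.
exists f; split.
- apply: (measurable_fun_einfs _ 0%N) => n.
  apply: measurable_fun_ifT => //.
  apply: (measurable_fun_bool true).
  have [m1 _ _ _ _] := hBB (qs n).
  rewrite setTI (_ : _ @^-1` _ = (BB (qs n)).1) //.
  by apply/seteqP; split => y /=; [move=> /set_mem | move=> /mem_set].
- move=> y; apply: le_ereal_inf_tmp => _ [n _ <-].
  exact: le_trans (h0 y) (ltW (phih n y)).
- exists (\bigcup_n ((BB (qs n)).2 `\` (BB (qs n)).1)).
  split.
  + apply: bigcupT_measurable => n; have [m1 m2 _ _ _] := hBB (qs n).
    exact: measurableD.
  + apply: measure_negligible.
      apply: bigcupT_measurable => n; have [m1 m2 _ _ _] := hBB (qs n).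
      exact: measurableD.
    apply: negligible_bigcup => n; have [m1 m2 _ _ hn] := hBB (qs n).
    by exists ((BB (qs n)).2 `\` (BB (qs n)).1); split => //; exact: measurableD.
  + move=> y /= hy; apply: contra_notP hy => hN.
    have key : forall q : rat, h y < (ratr q)%:E -> y \in (BB q).1.
      move=> q hq; apply/mem_set.
      have [_ _ _ s2 _] := hBB q.
      have := s2 _ hq => hy2.
      apply: contra_notP hN => hn; exists (pickle q) => //.
      by rewrite qsP.
    apply/eqP; rewrite eq_le; apply/andP; split; last first.
      apply: le_ereal_inf_tmp => _ [n _ <-]; exact: ltW.
    apply/lee_addgt0Pr => e e0.
    have hv := hfin y; rewrite -(fineK hv).
    have : (fine (h y) < fine (h y) + e)%R by rewrite ltrDl.
    move=> /rat_in_itvoo[q]; rewrite in_itv /= => /andP[q1 q2].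
    apply: (@le_trans _ _ (phi (pickle q) y)).
      apply: ereal_inf_lbound; by exists (pickle q).
    rewrite /phi qsP ifT; last by apply: key; rewrite -(fineK hv) lte_fin.
    by rewrite lee_fin ltW.
Qed.
Lemma Gmeas2 (R : realType) (X : pointedType) (rho : X -> X -> R) (G : X -> X -> \bar R) y :
  borel_kernel rho G -> measurable_fun [set: Borel rho] (fun z : Borel rho => G y z).
Proof. case=> _ mG; have H := (measurable_fun_pair2 (y : Borel rho) mG); exact H. Qed.

Lemma ae_of_null (R : realType) (X : pointedType) (rho : X -> X -> R)
  (nu : {finite_measure set (Borel rho) -> \bar R}) (B : set X) (Q : X -> Prop) :
  measurable (B : set (Borel rho)) -> nu (~` B) = 0 -> (forall z, B z -> Q z) ->
  {ae nu, forall z, Q z}.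
Proof.
move=> mB nB hQ; exists (~` B); split => //; first exact: measurableC.
by move=> z /= nz Bz; apply: nz; exact: hQ.
Qed.

Lemma pot_le (R : realType) (X : pointedType) (rho : X -> X -> R) (G : X -> X -> \bar R)
  (nu : {finite_measure set (Borel rho) -> \bar R}) (B : set X) y (K : R) :
  borel_kernel rho G -> measurable (B : set (Borel rho)) -> nu (~` B) = 0 ->
  (0 <= K)%R -> (forall z, B z -> G y z <= K%:E) -> pot G nu y <= K%:E * nu setT.
Proof.
move=> hG mB nB K0 hK; rewrite /pot -integral_cst //.
apply: ae_ge0_le_integral.
- by [].
- by move=> z _; apply: ltW; case: hG => h _; exact: h.
- exact: Gmeas2.
- by move=> z _; rewrite /= lee_fin.
- by [].
- exists (~` B); split => //; first exact: measurableC.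
  by move=> z /= nz Bz; apply: nz => _; exact: hK.
Qed.

Lemma pot_ge (R : realType) (X : pointedType) (rho : X -> X -> R) (G : X -> X -> \bar R)
  (nu : {finite_measure set (Borel rho) -> \bar R}) (B : set X) y (K : R) :
  borel_kernel rho G -> measurable (B : set (Borel rho)) -> nu (~` B) = 0 ->
  (0 <= K)%R -> (forall z, B z -> K%:E <= G y z) -> K%:E * nu setT <= pot G nu y.
Proof.
move=> hG mB nB K0 hK; rewrite /pot -integral_cst //.
apply: ae_ge0_le_integral.
- by [].
- by move=> z _; rewrite /= lee_fin.
- by [].
- by move=> z _; apply: ltW; case: hG => h _; exact: h.
- exact: Gmeas2.
- exists (~` B); split => //; first exact: measurableC.
  by move=> z /= nz Bz; apply: nz => _; exact: hK.
Qed.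
Lemma cap_le_pot (R : realType) (X : pointedType) (rho : X -> X -> R) (G : X -> X -> \bar R)
  (nu : {finite_measure set (Borel rho) -> \bar R}) (A : set X) (K : R) :
  borel_kernel rho G -> measurable (A : set (Borel rho)) -> (0 <= K)%R ->
  (forall y z, G y z <= K%:E * G z y) ->
  (forall y, A y -> 1 <= pot G nu y) ->
  cap rho G A <= K%:E * nu setT.
Proof.
move=> hG mA K0 hsym hA; apply: ge_ereal_sup => _ [m [mA0 hm] <-].
have [Gpos mG] := hG.
pose f := fun p : (Borel rho * Borel rho)%type => G p.1 p.2.
have mf : measurable_fun setT f by exact mG.
have f0 : forall p, 0 <= f p by move=> p; apply: ltW; exact: Gpos.
have mpot : measurable_fun [set: Borel rho] (pot G nu).
  exact: (@measurable_fun_fubini_tonelli_F _ _ _ _ _ nu f mf f0).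
have step1 : m setT <= \int[m]_y pot G nu y.
  have -> : m setT = \int[m]_y (cst 1) y by rewrite integral_cst // mul1e.
  apply: ae_ge0_le_integral => //.
  - by move=> y _; rewrite /pot; apply: integral_ge0 => z _; exact: f0 (y, z).
  - exists (~` A); split => //; first exact: measurableC.
    by move=> z /= nz Az; apply: nz => _; exact: hA.
apply: (le_trans step1).
have -> : \int[m]_y pot G nu y = \int[m \x nu]_p f p.
  by rewrite (fubini_tonelli1 f mf f0).
rewrite (fubini_tonelli2 f mf f0).
rewrite -integral_cst //.
apply: ge0_le_integral => //.
- move=> z _; apply: integral_ge0 => y _; exact: f0 (y, z).
- exact: (@measurable_fun_fubini_tonelli_G _ _ _ _ _ m f mf f0).
- move=> z _; rewrite /fubini_G /=.
  apply: (@le_trans _ _ (\int[m]_y (K%:E * G z y))).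
    apply: ge0_le_integral.
    + by [].
    + move=> y _; exact: f0 (y, z).
    + have H := measurable_fun_pair1 (z : Borel rho) mf; exact H.
    + apply: measurable_funeM; have H := @Gmeas2 _ _ _ G z hG; exact H.
    + move=> y _; exact: hsym.
  rewrite ge0_integralZl //.
  - rewrite -[X in _ <= X]mule1; apply: lee_wpmul2l; first by rewrite lee_fin.
    exact: hm.
  - exact: Gmeas2.
  - by move=> y _; exact: f0 (z, y).
Qed.
Lemma g_anti (R : realType) (X : pointedType) (rho : X -> X -> R) G g c cD M0 alpha0 (s t : R) :
  G2 rho G g c cD M0 alpha0 -> (0 <= s)%R -> (s <= t)%R -> g t <= g s.
Proof.
case=> [[gdec _ _] _ _ _ _] s0; rewrite le_eqVlt => /orP[/eqP->//|st].
exact: ltW (gdec _ _ s0 st).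
Qed.

Lemma g_fin (R : realType) (X : pointedType) (rho : X -> X -> R) G g c cD M0 alpha0 (t : R) :
  G2 rho G g c cD M0 alpha0 -> (0 < t)%R -> g t = (fine (g t))%:E.
Proof.
move=> hG t0; case: (hG) => [[gdec _ gpos] _ _ _ _].
have h1 := gdec 0%R t (lexx _) t0.
have h2 := gpos t (ltW t0).
by rewrite fineK // ge0_fin_numE ?(ltW h2) // (lt_le_trans h1) // leey.
Qed.

Lemma gg_pos (R : realType) (X : pointedType) (rho : X -> X -> R) G g c cD M0 alpha0 (t : R) :
  G2 rho G g c cD M0 alpha0 -> (0 < t)%R -> (0 < fine (g t))%R.
Proof.
move=> hG t0; case: (hG) => [[_ _ gpos] _ _ _ _].
by rewrite -lte_fin -(g_fin hG t0) gpos // ltW.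
Qed.

Lemma gg_anti (R : realType) (X : pointedType) (rho : X -> X -> R) G g c cD M0 alpha0 (s t : R) :
  G2 rho G g c cD M0 alpha0 -> (0 < s)%R -> (s <= t)%R -> (fine (g t) <= fine (g s))%R.
Proof.
move=> hG s0 st; rewrite -lee_fin -(g_fin hG s0) -(g_fin hG (lt_le_trans s0 st)).
exact: (g_anti hG (ltW s0) st).
Qed.

Lemma gg_doub (R : realType) (X : pointedType) (rho : X -> X -> R) G g c cD M0 alpha0 (r : R) :
  G2 rho G g c cD M0 alpha0 -> (0 < r)%R -> (fine (g (r / 2)) <= cD * fine (g r))%R.
Proof.
move=> hG r0; case: (hG) => [_ _ hd _ _].
rewrite -lee_fin EFinM -(g_fin hG r0) -(g_fin hG _); first exact: hd.
by rewrite divr_gt0.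
Qed.

Lemma gg_iter (R : realType) (X : pointedType) (rho : X -> X -> R) G g c cD M0 alpha0 (s : R) n :
  G2 rho G g c cD M0 alpha0 -> (0 < s)%R ->
  (M0 ^+ n * fine (g s) <= fine (g (alpha0 ^+ n * s)))%R.
Proof.
move=> hG s0; case: (hG) => [_ [_ _ M01 a0 _] _ hM _].
elim: n => [|n IH]; first by rewrite !expr0 !mul1r.
have hpos : (0 < alpha0 ^+ n * s)%R by rewrite mulr_gt0 // exprn_gt0.
rewrite exprS -mulrA (le_trans (ler_wpM2l _ IH)) //; first by rewrite (le_trans ler01).
rewrite exprS -mulrA -lee_fin EFinM -(g_fin hG hpos) -(g_fin hG _).
  exact: hM.
by rewrite mulr_gt0.
Qed.
Local Close Scope ereal_scope.
Lemma final_real (R : realType) (c cD c1 c2 w ga g2 a pA : R) :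
  (1 <= c)%R -> (1 <= cD)%R -> (1 <= c1)%R -> (1 <= c2)%R -> (0 < w)%R -> (0 < ga)%R ->
  (0 < g2)%R -> (c2^-1 * ga^-1 <= w)%R -> (ga <= cD * g2)%R -> (0 <= pA)%R ->
  (forall delta : R, (0 < delta)%R -> exists2 nT : R, (a <= c ^+ 2 * nT)%R &
      (nT * g2 / (2 * c * c1 ^+ 2) - delta / c1 <= pA)%R) ->
  ((2 * cD * c ^+ 3 * c1 ^+ 2 * c2)^-1 * (a * w^-1) <= pA)%R.
Proof.
move=> c1' cD1 c11 c21 w0 ga0 g20 hw hga pA0 hkey.
have c0 : (0 < c)%R by apply: lt_le_trans c1'; exact: ltr01.
have cD0 : (0 < cD)%R by apply: lt_le_trans cD1; exact: ltr01.
have c10 : (0 < c1)%R by apply: lt_le_trans c11; exact: ltr01.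
have c20 : (0 < c2)%R by apply: lt_le_trans c21; exact: ltr01.
set K := (a * g2 / (2 * c ^+ 3 * c1 ^+ 2))%R.
have hK : (K <= pA)%R.
  rewrite leNgt; apply/negP => hlt.
  have d0 : (0 < c1 * (K - pA) / 2)%R.
    by rewrite divr_gt0 // mulr_gt0 // subr_gt0.
  have [nT h1 h2] := hkey _ d0.
  have h3 : (K <= nT * g2 / (2 * c * c1 ^+ 2))%R.
    have -> : K = ((c ^+ 2)^-1 * a) * (g2 / (2 * c * c1 ^+ 2))%R.
      rewrite /K; field; rewrite ?mulf_neq0 ?expf_neq0 ?gt_eqF //.
    have -> : (nT * g2 / (2 * c * c1 ^+ 2) = nT * (g2 / (2 * c * c1 ^+ 2)))%R by rewrite mulrA.
    apply: ler_wpM2r.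
      by rewrite divr_ge0 ?ltW // mulr_gt0 ?exprn_gt0 // mulr_gt0.
    by rewrite ler_pdivrMl ?exprn_gt0.
  have h4 : (c1 * (K - pA) / 2 / c1 = (K - pA) / 2)%R.
    by field; rewrite gt_eqF.
  rewrite h4 in h2; lra.
have hwi : (w^-1 <= c2 * ga)%R.
  rewrite -[w^-1]mulr1 ler_pdivrMl //.
  have : (c2 * ga * (c2^-1 * ga^-1) <= c2 * ga * w)%R.
    by apply: ler_wpM2l => //; rewrite ltW // mulr_gt0.
  have -> : (c2 * ga * (c2^-1 * ga^-1) = 1)%R by field; rewrite !gt_eqF.
  by rewrite mulrC.
have eta0 : (0 < (2 * cD * c ^+ 3 * c1 ^+ 2 * c2)^-1)%R.
  by rewrite invr_gt0 !mulr_gt0 // exprn_gt0.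
have wi0 : (0 < w^-1)%R by rewrite invr_gt0.
set eta := ((2 * cD * c ^+ 3 * c1 ^+ 2 * c2)^-1)%R in eta0 *.
have [a0|a0] := leP a 0%R.
  have : (0 <= eta * w^-1)%R by rewrite mulr_ge0 // ltW.
  nra.
apply: le_trans hK.
have -> : K = eta * (a * (c2 * (cD * g2)))%R.
  rewrite /K /eta; field; rewrite ?mulf_neq0 ?expf_neq0 ?gt_eqF //.
apply: ler_wpM2l; first exact: ltW.
apply: ler_wpM2l; first exact: ltW.
apply: (le_trans hwi); apply: ler_wpM2l => //; exact: ltW.
Qed.
Unset Implicit Arguments.
Local Close Scope ereal_scope.

Theorem proposition4p9 (R : realType) (X : pointedType) (rho : X -> X -> R)
  (X0 : set X)
  (mu : set X -> X -> {finite_measure set (Borel rho) -> \bar R})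
  (G : X -> X -> \bar R) (g : R -> \bar R)
  (c cD M0 alpha0 c1 c2 : R) (k : nat) (alpha : R) :
  is_metric rho -> mseparable rho -> mopen rho X0 ->
  balayage_family mu -> borel_kernel rho G ->
  G1 mu G X0 c1 -> G2 rho G g c cD M0 alpha0 -> G3 rho G g X0 c2 ->
  Num.max (2 * cD ^+ 2 * c ^+ 2 * c1 ^+ 2) (3 * c * c2) <= M0 ^+ k ->
  alpha0 ^+ k < 4^-1 ->
  0 < alpha -> alpha <= alpha0 ^+ k ->
  forall (x0 : X) (r : R), X0 x0 -> 0 < r -> (r%:E < R0 rho X0 x0)%E ->
  forall (x : X) (A : set X),
    mball rho x0 (alpha * r) x ->
    mclosed rho A -> A `<=` mball rho x0 (alpha * r) ->
    ((2 * cD * c ^+ 3 * c1 ^+ 2 * c2)^-1%:E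
       * (cap rho G A / cap rho G (mball rho x0 (alpha * r)))
     <= eps mu (A `|` ~` mball rho x0 r) x A)%E.
Proof.
move=> hmet hsep hX0 hbal hGk hG1 hG2 hG3 hMk ha0k a0 aa0 x0 r x0X0 r0 rR0 x A xW Acl AW.
have [rho0 rho_eq rho_sym rho_tri] := hmet.
have [[gdec gcont gpos] [c1' cD1 M01 a00 a01] hdoub hMg hGg] := hG2.
have [c11 G1P] := hG1.
have [c21 G3P] := hG3.
have [bal1 bal2 bal3 bal4 bal5] := hbal.
have c0 : 0 < c by apply: lt_le_trans c1'; exact: ltr01.
have cD0 : 0 < cD by apply: lt_le_trans cD1; exact: ltr01.
have c10 : 0 < c1 by apply: lt_le_trans c11; exact: ltr01.
have c20 : 0 < c2 by apply: lt_le_trans c21; exact: ltr01.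
have a14 : alpha < 4^-1 := le_lt_trans aa0 ha0k.
have ar0 : 0 < alpha * r by rewrite mulr_gt0.
have arr : alpha * r < r by nra.
have arR0 : ((alpha * r)%:E < R0 rho X0 x0)%E by apply: lt_trans rR0; rewrite lte_fin.
have WU : calU rho X0 (mball rho x0 (alpha * r)) := calU_ball hmet arR0.
have mA : measurable (A : set (Borel rho)) := mclosed_meas Acl.
have r20 : 0 < r / 2 by rewrite divr_gt0.
have ar20 : 0 < 2 * (alpha * r) by rewrite mulr_gt0.
set g2 := fine (g (2 * (alpha * r))).
have g20 : 0 < g2 := gg_pos hG2 ar20.
set gr2 := fine (g (r / 2)).
have gr20 : 0 < gr2 := gg_pos hG2 r20.
have hconst : c * gr2 <= g2 / (2 * c * c1 ^+ 2).
  have h1 : gr2 <= cD * fine (g r) := gg_doub hG2 r0.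
  have h2 : fine (g r) <= cD * fine (g (2 * r)).
    have := gg_doub hG2 (mulr_gt0 (ltr0n _ 2) r0).
    by have -> : 2 * r / 2 = r by field.
  have h3 := gg_iter k hG2 (mulr_gt0 (ltr0n _ 2) r0).
  have h4 : fine (g (alpha0 ^+ k * (2 * r))) <= g2.
    apply: gg_anti hG2 ar20 _.
    have -> : alpha0 ^+ k * (2 * r) = 2 * (alpha0 ^+ k * r) by rewrite mulrCA.
    by rewrite ler_pM2l // ler_pM2r.
  have h5 : 2 * cD ^+ 2 * c ^+ 2 * c1 ^+ 2 <= M0 ^+ k.
    by apply: le_trans hMk; rewrite le_max lexx.
  have y0 : 0 <= fine (g (2 * r)) by apply: ltW; apply: gg_pos hG2 _; rewrite mulr_gt0.
  have gr0 : 0 <= fine (g r) by apply: ltW; apply: gg_pos hG2 _.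
  rewrite ler_pdivlMr; last by rewrite mulr_gt0 // ?exprn_gt0 // mulr_gt0.
  set y := fine (g (2 * r)) in y0 h2 h3 h4.
  set u := fine (g r) in gr0 h1 h2.
  have h6 : gr2 <= cD ^+ 2 * y.
    apply: (le_trans h1); rewrite expr2 -mulrA; apply: ler_wpM2l; [exact: ltW| exact: h2].
  have h7 : (2 * cD ^+ 2 * c ^+ 2 * c1 ^+ 2) * y <= g2.
    apply: le_trans h4; apply: le_trans h3; apply: ler_wpM2r => //.
  have -> : c * gr2 * (2 * c * c1 ^+ 2) = (2 * c ^+ 2 * c1 ^+ 2) * gr2.
    by rewrite !expr2; ring.
  apply: le_trans h7.
  have -> : (2 * cD ^+ 2 * c ^+ 2 * c1 ^+ 2) * y = (2 * c ^+ 2 * c1 ^+ 2) * (cD ^+ 2 * y).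
    by rewrite !expr2; ring.
  apply: ler_wpM2l => //.
  by rewrite !mulr_ge0 // ?exprn_ge0 // ltW.
set Ur := mball rho x0 r.
set W := mball rho x0 (alpha * r).
set pA := fine (eps mu (A `|` ~` Ur) x A).
have PAE : eps mu (A `|` ~` Ur) x A = pA%:E.
  by rewrite fineK // (@fin_num_measure _ _ _ (eps mu (A `|` ~` Ur) x) A mA).
have pA0 : 0 <= pA by rewrite -lee_fin -PAE; exact: measure_ge0.
have hsym : forall y z, (G y z <= (c ^+ 2)%:E * G z y)%E.
  move=> y z; apply: le_trans (hGg y z).2 _.
  rewrite rho_sym.
  apply: (@le_trans _ _ ((c ^+ 2)%:E * (c^-1%:E * g (rho z y))))%E; last first.
    by apply: lee_wpmul2l; [rewrite lee_fin exprn_ge0 // ltW | exact: (hGg z y).1].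
  by rewrite muleA -EFinM expr2 -mulrA divff ?gt_eqF // mulr1.
have hA1 : forall y, A y -> eps mu A y setT = 1%E.
  move=> y Ay; rewrite /eps bal3 //; first exact: diracT.
have key : forall delta : R, 0 < delta -> exists2 nT : R,
    (cap rho G A <= (c ^+ 2 * nT)%:E)%E & nT * g2 / (2 * c * c1 ^+ 2) - delta / c1 <= pA.
  move=> d d0.
  have [B [nu [[Bcl AB BW] nuB hxB hy]]] := G1P _ x d A WU xW d0 Acl AW.
  have mB := mclosed_meas Bcl.
  set nT := fine (nu setT).
  have nTE : nu setT = nT%:E by rewrite fineK // fin_num_measure.
  have nT0 : 0 <= nT by rewrite -lee_fin -nTE; exact: measure_ge0.
  have potx : ((c^-1 * g2 * nT)%:E <= pot G nu x)%E.
    rewrite EFinM -nTE; apply: (pot_ge hGk mB nuB); first by rewrite mulr_ge0 // ?invr_ge0 ltW.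
    move=> z Bz; have Wz := BW z Bz.
    apply: le_trans (hGg x z).1; rewrite EFinM; apply: lee_wpmul2l.
      by rewrite lee_fin invr_ge0 ltW.
    rewrite /g2 -(g_fin hG2 ar20); apply: (g_anti hG2 (rho0 x z)).
    apply: ltW; apply: (le_lt_trans (rho_tri x x0 z)).
    rewrite rho_sym; move: xW Wz; rewrite /W /mball /= => h1 h2; lra.
  have poty : forall y, ~ Ur y -> (pot G nu y <= (c * gr2 * nT)%:E)%E.
    move=> y ny; rewrite EFinM -nTE; apply: (pot_le hGk mB nuB); first by rewrite mulr_ge0 // ltW.
    move=> z Bz; have Wz := BW z Bz.
    apply: le_trans (hGg y z).2 _; rewrite EFinM; apply: lee_wpmul2l.
      by rewrite lee_fin ltW.
    rewrite /gr2 -(g_fin hG2 r20); apply: (g_anti hG2 (ltW r20)).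
    have h1 : r <= rho x0 y by rewrite leNgt; apply/negP => h; apply: ny.
    have h3 := rho_tri x0 z y.
    move: Wz; rewrite /W /mball /= => h2; rewrite (rho_sym y z); nra.
  set S := c * gr2 * nT.
  have S0 : 0 <= S by rewrite mulr_ge0 // mulr_ge0 // ltW.
  have Vo : mopen rho (~` (A `|` ~` Ur)).
    by rewrite setCU setCK; apply: mopenI => //; exact: mball_open.
  have VA : ~` (A `|` ~` Ur) `<=` ~` A by apply: subsetC; exact: subsetUl.
  set P := mu (~` (A `|` ~` Ur)) x.
  have hum : umeasurable_fun rho (fun y => mu (~` A) y setT) := bal4 _ _ Acl measurableT.
  have [f [mf f0 fae]] := borel_version P hum (fun y => measure_ge0 _ _)
     (fun y => @fin_num_measure _ _ _ (mu (~` A) y) setT measurableT).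
  have e5 := bal5 (~` A) _ x Acl Vo VA setT measurableT f mf fae.
  have comp : (eps mu A x setT <= (pA + S)%:E)%E.
    rewrite /eps e5.
    have ind0 : forall y, (0 <= \1_A y :> R) by move=> y; rewrite indicE; case: (_ \in _).
    apply: (@le_trans _ _ (\int[P]_y ((\1_A y)%:E + S%:E))%E).
      apply: ae_ge0_le_integral.
      - by [].
      - by move=> y _; exact: f0.
      - exact: mf.
      - by move=> y _; rewrite adde_ge0 // lee_fin.
      - apply: emeasurable_funD; last exact: measurable_cst.
        by apply/measurable_EFinP; exact: measurable_indic.
      - have nV : P.-negligible (~` (A `|` ~` Ur)).
          exists (~` (A `|` ~` Ur)); split => //; first exact: mopen_meas.
          exact: bal1.
        apply: (negligibleS _ (negligibleU fae nV)).
        move=> y /= hny.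
        case: (pselect (f y = mu (~` A) y setT)) => [e|ne]; last by left.
        right => hAU; apply: hny => _; rewrite e; case: hAU => [Ay|nUy].
          have := hA1 y Ay; rewrite /eps => ->.
          by rewrite indicE mem_set //= lee_fin lerDl.
        apply: le_trans (hy y).1 _; apply: le_trans (poty y nUy) _.
        by rewrite lee_fin lerDr.
    rewrite ge0_integralD; first last.
    - exact: measurable_cst.
    - by move=> y _; rewrite lee_fin.
    - by apply/measurable_EFinP; exact: measurable_indic.
    - by move=> y _; rewrite lee_fin.
    - by [].
    rewrite integral_indic // setIT integral_cst //.
    rewrite [X in (X + _ <= _)%E](_ : _ = pA%:E); last exact: PAE.
    rewrite EFinD leeD2l //.
    rewrite -[X in (_ <= X)%E]mule1; apply: lee_wpmul2l; first by rewrite lee_fin.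
    exact: bal2.
  exists nT.
    have := @cap_le_pot _ _ rho G nu A (c ^+ 2) hGk mA (exprn_ge0 2 (ltW c0)) hsym.
    rewrite nTE -EFinM; apply.
    by move=> y Ay; rewrite -(hA1 y Ay); exact: (hy y).1.
  set bx := fine (eps mu B x setT).
  have bxE : eps mu B x setT = bx%:E by rewrite fineK // fin_num_measure.
  set hx := fine (eps mu A x setT).
  have hxE : eps mu A x setT = hx%:E by rewrite fineK // fin_num_measure.
  have h1 : c^-1 * g2 * nT <= c1 * bx.
    rewrite -lee_fin; apply: le_trans potx _; rewrite EFinM -bxE; exact: (hy x).2.
  have h2 : bx - d < c1 * hx by rewrite -lte_fin EFinM EFinB -bxE -hxE.
  have h3 : hx <= pA + S by rewrite -lee_fin -hxE.
  have h4 : S <= nT * (g2 / (2 * c * c1 ^+ 2)).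
    have -> : S = nT * (c * gr2) by rewrite /S [RHS]mulrC.
    apply: ler_wpM2l; first exact: nT0.
    exact: hconst.
  set t := nT * (g2 / (2 * c * c1 ^+ 2)) in h4.
  have -> : nT * g2 / (2 * c * c1 ^+ 2) = t by rewrite /t -mulrA.
  have ht : c^-1 * g2 * nT = c1 * (2 * c1 * t).
    by rewrite /t; field; rewrite ?mulf_neq0 ?gt_eqF.
  set e := d / c1.
  have he : d = c1 * e by rewrite /e; field; rewrite gt_eqF.
  rewrite ht in h1; rewrite he in h2.
  have h5 : 2 * c1 * t <= bx.
    move: h1; rewrite ler_pM2l //.
  have h6 : bx < c1 * (hx + e) by rewrite mulrDr; lra.
  have h7 : 2 * t < hx + e.
    have h8 : c1 * (2 * t) < c1 * (hx + e) by rewrite mulrA (mulrC c1 2); lra.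
    by move: h8; rewrite ltr_pM2l.
  lra.
have hW3 := G3P x0 (alpha * r) x0X0 ar0 arR0.
set ga := fine (g (alpha * r)).
have ga0 : 0 < ga := gg_pos hG2 ar0.
rewrite (g_fin hG2 ar0) -/ga inver gt_eqF // -EFinM in hW3.
have hga : ga <= cD * g2.
  have := gg_doub hG2 ar20.
  by have -> : 2 * (alpha * r) / 2 = alpha * r by field.
have w0' : 0 < c2^-1 * ga^-1 by rewrite mulr_gt0 // invr_gt0.
rewrite -/W; case eW : (cap rho G W) hW3 => [w| |] hW3.
- have w0 : 0 < w by apply: lt_le_trans w0' _; rewrite -lee_fin.
  have [nT1 hn1 _] := key 1 ltr01.
  case eA : (cap rho G A) hn1 => [a| |] hn1.
  + rewrite inver gt_eqF // -!EFinM PAE lee_fin.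
    apply: (@final_real R c cD c1 c2 w ga g2 a pA) => //.
    move=> d d0; have [nT h1 h2] := key d d0; exists nT => //.
    by rewrite -lee_fin -eA.
  + by move: hn1; rewrite leye_eq.
  + rewrite inver gt_eqF // gt0_mulNye ?lte_fin ?invr_gt0 // gt0_muleNy ?leNye //.
    by rewrite lte_fin invr_gt0 !mulr_gt0 // exprn_gt0.
- by rewrite invey !mule0; exact: measure_ge0.
- by move: hW3; rewrite leeNy_eq.
Qed.
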